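(* Let $U:\mathbb{R}\to\mathbb{R}$ be a twice continuously differentiable potential energy function with several stable solutions (local minimizers), let $y_{+}$ denote the largest stable solution of $U$, and assume that $y_{+}$ is the unique global minimizer of $U$, i.e. $U(y_{+})<U(y)$ for all $y\neq y_{+}$. Let $D>0$ be a constant coupling strength and $x_{\max}>0$. Then there is no pot-shaped stationary solution, i.e. there is no twice differentiable function $y:[-x_{\max},x_{\max}]\to\mathbb{R}$ satisfying $$0=-U'(y(x))+D\,y''(x)\quad\text{for } x\in(-x_{\max},x_{\max}),\qquad y(\pm x_{\max})=y_{+},$$ together with $y(0)<y(\pm x_{\max})$ and $y'(x)\ge 0$ for all $x\in(0,x_{\max})$.
   Context: The setting is the spatially-coupled dynamical system $\partial y/\partial t=-U'(y)+D\,\partial^{2}y/\partial x^{2}$ for $x\in(-x_{\max},x_{\max})$, $t\ge 0$, with boundary condition $y(\pm x_{\max},t)=y_{+}$, where the coupling function $D>0$ is a constant independent of $y$. A stationary solution is a function $y(x)$ satisfying $0=-U'(y)+D\,y''$ on $(-x_{\max},x_{\max})$ with $y(\pm x_{\max})=y_{+}$. A stable solution of $U$ means a local minimizer of $U$. A stationary solution $y(x)$ is called pot-shaped if (i) $y(0)<y(\pm x_{\max})$ and (ii) $dy/dx\ge 0$ for $x>0$. *)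

(* Defs.v *)
From Stdlib Require Import Reals.
Open Scope R_scope.

Definition is_local_min (U : R -> R) (a : R) : Prop :=
  exists d, 0 < d /\ forall z, Rabs (z - a) < d -> U a <= U z.

Definition is_C2 (U dU ddU : R -> R) : Prop :=
  (forall x, derivable_pt_lim U x (dU x)) /\
  (forall x, derivable_pt_lim dU x (ddU x)) /\
  continuity ddU.

Definition continuous_on_closed (f : R -> R) (a b : R) : Prop :=
  forall x, a <= x <= b ->
    forall eps, 0 < eps -> exists delta, 0 < delta /\
      forall z, a <= z <= b -> Rabs (z - x) < delta -> Rabs (f z - f x) < eps.

(* Main.v *)
Require Import Defs.
From Stdlib Require Import Reals Lra.
Open Scope R_scope.

Theorem theorem1 (U dU ddU : R -> R) (yplus D xmax : R)
  (hU : is_C2 U dU ddU)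
  (hseveral : exists a b, a <> b /\ is_local_min U a /\ is_local_min U b)
  (hyplus_stable : is_local_min U yplus)
  (hyplus_largest : forall a, is_local_min U a -> a <= yplus)
  (hglobal : forall z, z <> yplus -> U yplus < U z)
  (hD : 0 < D) (hxmax : 0 < xmax) :
  ~ (exists y dy ddy : R -> R,
       continuous_on_closed y (- xmax) xmax /\
       (forall x, - xmax < x < xmax ->
          derivable_pt_lim y x (dy x) /\ derivable_pt_lim dy x (ddy x)) /\
       (forall x, - xmax < x < xmax -> 0 = - dU (y x) + D * ddy x) /\
       y (- xmax) = yplus /\ y xmax = yplus /\
       y 0 < y (- xmax) /\ y 0 < y xmax /\
       (forall x, 0 < x < xmax -> 0 <= dy x)).
Proof.
  intros [y [dy [ddy [Hc [Hd [Heq [Hl [Hr [H0l [H0r _]]]]]]]]]].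
  destruct hU as [HU [HdU _]].
  assert (Hcont : forall c, - xmax < c < xmax -> continuity_pt y c).
  { intros c Hc'. apply derivable_continuous_pt. exists (dy c). apply (Hd c Hc'). }
  assert (He1 : 0 < yplus - y 0) by lra.
  destruct (Hc (- xmax) ltac:(lra) _ He1) as [da [Hda Ha]].
  destruct (Hc xmax ltac:(lra) _ He1) as [db [Hdb Hb]].
  set (d := Rmin (Rmin da db) xmax).
  assert (Hd1 : d <= da /\ d <= db /\ d <= xmax /\ 0 < d).
  { unfold d. repeat split; try apply Rmin_l; try apply Rmin_r.
    - eapply Rle_trans; [apply Rmin_l|apply Rmin_l].
    - eapply Rle_trans; [apply Rmin_l|apply Rmin_r].
    - apply Rmin_pos; [apply Rmin_pos|]; lra. }
  set (b := xmax - d/2).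
  assert (Hyb : y 0 < y b).
  { assert (H := Hb b ltac:(unfold b; lra) ltac:(unfold b; rewrite Rabs_left; lra)).
    rewrite Hr in H. apply Rabs_def2 in H. lra. }
  assert (Hymb : y 0 < y (- b)).
  { assert (H := Ha (- b) ltac:(unfold b; lra)
           ltac:(unfold b; rewrite Rabs_right; lra)).
    rewrite Hl in H. apply Rabs_def2 in H. lra. }
  destruct (continuity_ab_min y (- b) b ltac:(unfold b; lra)
             ltac:(intros c Hc'; apply Hcont; unfold b in *; lra)) as [mx [Hmin Hmx]].
  assert (Hm0 : y mx <= y 0) by (apply Hmin; unfold b; lra).
  assert (Hmxi : - b < mx < b).
  { split; destruct Hmx as [H1 H2]; destruct H1 as [H1|H1]; destruct H2 as [H2|H2];
      subst; try lra. }
  assert (Hmxo : - xmax < mx < xmax) by (unfold b in *; lra).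
  assert (Hdy0 : dy mx = 0).
  { assert (pr : derivable_pt y mx) by (exists (dy mx); apply (Hd mx Hmxo)).
    pose proof (deriv_minimum y (- b) b mx (exist _ (dy mx) (proj1 (Hd mx Hmxo)))
                 (proj1 Hmxi) (proj2 Hmxi)) as H.
    simpl in H. apply H. intros x H1 H2. apply Hmin. lra. }
  set (E := fun x => D/2 * (dy x * dy x) - U (y x)).
  assert (HE : forall x, - xmax < x < xmax -> derivable_pt_lim E x 0).
  { intros x Hx. destruct (Hd x Hx) as [H1 H2].
    assert (Hm : derivable_pt_lim (fun t => D/2 * (dy t * dy t)) x
                   (D/2 * (ddy x * dy x + dy x * ddy x))).
    { apply (derivable_pt_lim_scal (fun t => dy t * dy t)).
      apply (derivable_pt_lim_mult dy dy). exact H2. exact H2. }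
    assert (Hc2 : derivable_pt_lim (fun t => U (y t)) x (dU (y x) * dy x)).
    { apply (derivable_pt_lim_comp y U). exact H1. apply HU. }
    pose proof (derivable_pt_lim_minus _ _ x _ _ Hm Hc2) as H.
    replace 0 with (D / 2 * (ddy x * dy x + dy x * ddy x) - dU (y x) * dy x).
    exact H.
    specialize (Heq x Hx).
    replace (dU (y x)) with (D * ddy x) by lra. field. }
  assert (Hconst : forall u v, - xmax < u < xmax -> - xmax < v < xmax -> u < v -> E u = E v).
  { intros u v Hu Hv Huv.
    destruct (MVT_cor2 E (fun _ => 0) u v Huv) as [c [Hc1 _]].
    intros c Hc'. apply HE. lra. lra. }
  assert (Hne : y mx <> yplus) by lra.
  assert (Heps : 0 < U (y mx) - U yplus) by (specialize (hglobal _ Hne); lra).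
  assert (HUc : continuity_pt U yplus).
  { apply derivable_continuous_pt. exists (dU yplus). apply HU. }
  destruct (HUc _ Heps) as [al [Hal Hal2]].
  destruct (Hc xmax ltac:(lra) _ Hal) as [dc [Hdc Hdc2]].
  set (x := xmax - Rmin dc xmax / 2).
  assert (Hmn : 0 < Rmin dc xmax /\ Rmin dc xmax <= dc /\ Rmin dc xmax <= xmax).
  { split; [apply Rmin_pos; lra|split; [apply Rmin_l|apply Rmin_r]]. }
  assert (Hx : - xmax < x < xmax) by (unfold x; lra).
  assert (Hyx : Rabs (y x - yplus) < al).
  { rewrite <- Hr. apply Hdc2. unfold x; lra. unfold x; rewrite Rabs_left; lra. }
  assert (HUx : U (y x) < U (y mx)).
  { destruct (Req_dec (y x) yplus) as [Heqy|Hneq].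
    - rewrite Heqy. lra.
    - assert (H := Hal2 (y x) (conj (conj I (not_eq_sym Hneq)) Hyx)).
      simpl in H. unfold R_dist in H. apply Rabs_def2 in H. lra. }
  assert (HEe : E x = E mx).
  { destruct (total_order_T x mx) as [[H|H]|H].
    - apply Hconst; auto.
    - rewrite H; reflexivity.
    - symmetry; apply Hconst; auto. }
  unfold E in HEe. rewrite Hdy0 in HEe.
  assert (0 <= dy x * dy x) by apply Rle_0_sqr.
  assert (0 <= D/2 * (dy x * dy x)) by (apply Rmult_le_pos; lra).
  lra.
Qed.
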